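(* For every $n\ge1$, $S_n(n)=\dfrac{(-1)^{n-1}}{3\cdot 2^n(n-1)!}$.
   Context: Let $a_0,a_1,\dots$ be indeterminates and $a(x)=\sum_{i\ge0}a_ix^i$. For a positive integer $j$ set $G(x)=\prod_{i=0}^{j-1}\frac{1+a(x)x^2}{1+ix}$, $H(x)=\prod_{i=1-j}^{-1}\frac{1+ix}{1+a(x)x^2}$ (formal power series in $x$), $u=2j-1$, $v=j(j-1)$. For each $n\ge1$ there are unique polynomials $S_0(n),\dots,S_n(n)\in\mathbb{Q}[a_0,\dots,a_{n-2}]$ (rational constants when $n=1$), independent of $j$, such that for every positive integer $j$ the coefficient of $x^{n-1}$ in $\frac{G(x)-H(x)}{x^2}(1+a(x)x^2)$ equals $u\big(a_{n-1}+S_0(n)+S_1(n)v+\cdots+S_n(n)v^n\big)$. *)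

(* Defs.v *)
From HB Require Import structures.
From mathcomp Require Import all_boot all_order all_algebra.
From mathcomp Require Import mpoly.
Set Implicit Arguments. Unset Strict Implicit. Unset Printing Implicit Defensive.
Import Order.TTheory GRing.Theory Num.Theory.
Local Open Scope ring_scope.

(* Formal power series in x over a commutative ring R, as coefficient
   sequences: f n = coefficient of x^n. *)
Definition fps (R : comPzRingType) := nat -> R.

Section FPS.
Variable R : comPzRingType.
Implicit Types f g h : fps R.

Definition fps_const (c : R) : fps R := fun n => if n == 0%N then c else 0.
Definition fps_one : fps R := fps_const 1.
Definition fps_x : fps R := fun n => if n == 1%N then 1 else 0.
Definition fps_add f g : fps R := fun n => f n + g n.
Definition fps_sub f g : fps R := fun n => f n - g n.
Definition fps_mul f g : fps R :=
  fun n => \sum_(i < n.+1) f i * g (n - i)%N.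
Definition fps_pow f (k : nat) : fps R := iter k (fps_mul f) fps_one.
(* Inverse of a series f with constant term f 0 = 1, via the (locally finite)
   geometric series  1/f = sum_k (1 - f)^k ; the coefficient of x^n only
   receives contributions from k <= n since (1 - f) has zero constant term. *)
Definition fps_inv f : fps R :=
  fun n => \sum_(k < n.+1) fps_pow (fps_sub fps_one f) k n.
Definition fps_div f g : fps R := fps_mul f (fps_inv g).
(* f / x^2, for a series f whose coefficients of x^0 and x^1 vanish *)
Definition fps_divx2 f : fps R := fun n => f n.+2.
Definition fps_prod (I : Type) (r : seq I) (F : I -> fps R) : fps R :=
  foldr (fun i acc => fps_mul (F i) acc) fps_one r.
End FPS.

(* Working ring for a given n = m.+1: Q[a_0, ..., a_m] = Q[a_0,...,a_{n-1}],
   the variable a_i being 'X_i.  The series a(x) = sum_i a_i x^i; the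
   coefficients a_i with i >= n do not influence the coefficient of x^{n-1}
   below, and are set to 0. *)
Definition aser (m : nat) : fps {mpoly rat[m.+1]} :=
  fun i => if (i < m.+1)%N then 'X_(inord i) else 0.

Section Series.
Variable m : nat.
Local Notation R := {mpoly rat[m.+1]}.

Definition one_ax2 : fps R :=
  fps_add (fps_one R) (fps_mul (aser m) (fps_mul (fps_x R) (fps_x R))).
Definition one_ix (i : int) : fps R :=
  fps_add (fps_one R) (fps_mul (fps_const (i%:~R : R)) (fps_x R)).

Definition Gser (j : nat) : fps R :=
  fps_prod [seq (i%:Z) | i <- iota 0 j] (fun i => fps_div one_ax2 (one_ix i)).
(* H(x) = prod_{i=1-j}^{-1} (1 + i x) / (1 + a(x) x^2);
   the integers i = 1-j, ..., -1 are listed as i = - k, k = 1, ..., j-1 *)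
Definition Hser (j : nat) : fps R :=
  fps_prod [seq (- (k%:Z)) | k <- iota 1 j.-1] (fun i => fps_div (one_ix i) one_ax2).

Definition GHser (j : nat) : fps R :=
  fps_mul (fps_divx2 (fps_sub (Gser j) (Hser j))) one_ax2.
End Series.

(* Main.v *)
Require Import Defs.
From HB Require Import structures.
From mathcomp Require Import all_boot all_order all_algebra.
From mathcomp Require Import mpoly.
From mathcomp Require Import ring zify.
From Stdlib Require Import FunctionalExtensionality.
Import Order.TTheory GRing.Theory Num.Theory.
Local Open Scope ring_scope.
Set Implicit Arguments. Unset Strict Implicit. Unset Printing Implicit Defensive.

Section PF.
Variable k : nat.
Local Notation R := {mpoly rat[k]}.

Definition Pf (f : nat -> R) (d : nat) (c : R) : Prop :=
  exists p : {poly R}, [/\ (size p <= d.+1)%N, p`_d = c &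
     forall j, (0 < j)%N -> f j = p.[j%:R]].

Lemma natinv n (y : R) : n.+1%:R * (((n.+1)%:R^-1 : rat) *: y) = y.
Proof.
rewrite mulr_natl scalerMnl -mulr_natr mulVf ?scale1r //.
by rewrite pnatr_eq0.
Qed.

Lemma natinv2 n (y : R) : ((n.+1)%:R^-1 : rat) *: (n.+1%:R * y) = y.
Proof.
rewrite mulr_natl -scalerMnr scalerMnl -mulr_natr mulVf ?scale1r //.
by rewrite pnatr_eq0.
Qed.

Lemma natR_inj a b : (a%:R : R) = b%:R -> a = b.
Proof.
rewrite -!mpolyC_nat => /eqP; rewrite mpolyC_eq => /eqP.
by move/eqP; rewrite eqr_nat => /eqP.
Qed.

Lemma Pf_ext f g d c : (forall j, (0 < j)%N -> f j = g j) -> Pf f d c -> Pf g d c.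
Proof.
move=> fg [p [s e h]]; exists p; split=> // j j0; rewrite -fg //; exact: h.
Qed.

Lemma Pf_const a : Pf (fun _ => a) 0 a.
Proof.
exists a%:P; split; first exact: size_polyC_leq1.
  by rewrite coefC.
by move=> j _; rewrite hornerC.
Qed.

Lemma Pf_X : Pf (fun j => j%:R) 1 1.
Proof.
exists 'X; split; first by rewrite size_polyX.
  by rewrite coefX.
by move=> j _; rewrite hornerX.
Qed.

Lemma Pf_weak f d c d' : Pf f d c -> (d < d')%N -> Pf f d' 0.
Proof.
move=> [p [s e h]] dd; exists p; split=> //.
  by apply: (leq_trans s); rewrite ltnS ltnW.
by apply/(leq_sizeP _ _ (leq_trans s dd)).
Qed.

Lemma Pf_add f g d c1 c2 : Pf f d c1 -> Pf g d c2 ->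
  Pf (fun j => f j + g j) d (c1 + c2).
Proof.
move=> [p [s e h]] [q [s' e' h']]; exists (p + q); split.
- by apply: (leq_trans (size_polyD _ _)); rewrite geq_max s s'.
- by rewrite coefD e e'.
- by move=> j j0; rewrite hornerD h // h'.
Qed.

Lemma Pf_opp f d c : Pf f d c -> Pf (fun j => - f j) d (- c).
Proof.
move=> [p [s e h]]; exists (- p); split.
- by rewrite size_polyN.
- by rewrite coefN e.
- by move=> j j0; rewrite hornerN h.
Qed.

Lemma coef_mul_top (p q : {poly R}) d1 d2 :
  (size p <= d1.+1)%N -> (size q <= d2.+1)%N -> (p * q)`_(d1 + d2) = p`_d1 * q`_d2.
Proof.
move=> sp sq; rewrite coefM (bigD1 (@Ordinal (d1 + d2).+1 d1 (leq_addr d2 d1))) //=.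
rewrite addKn big1 ?addr0 // => i /eqP ne.
have [lt|gt] := ltnP i d1.
  rewrite [q`__](leq_sizeP _ _ sq) ?mulr0 //.
  lia.
rewrite [p`__](leq_sizeP _ _ sp) ?mul0r //.
case: (ltnP d1 i) => // le; exfalso; apply: ne; apply/val_inj => /=.
by apply/eqP; rewrite eqn_leq le gt.
Qed.

Lemma Pf_mul f g d1 d2 c1 c2 : Pf f d1 c1 -> Pf g d2 c2 ->
  Pf (fun j => f j * g j) (d1 + d2) (c1 * c2).
Proof.
move=> [p [s e h]] [q [s' e' h']]; exists (p * q); split.
- apply: (leq_trans (size_polyMleq _ _)).
  lia.
- by rewrite coef_mul_top // e e'.
- by move=> j j0; rewrite hornerM h // h'.
Qed.

Lemma Pf_exp f d c e : Pf f d c -> Pf (fun j => f j ^+ e) (d * e) (c ^+ e).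
Proof.
move=> H; elim: e => [|e IH].
  by rewrite muln0 expr0; apply: (Pf_ext _ (Pf_const 1)) => j _; rewrite expr0.
rewrite mulnS exprS; apply: (Pf_ext _ (Pf_mul H IH)) => j _; rewrite exprS.
done.
Qed.

Lemma Pf_sum n (t : 'I_n -> nat -> R) d c :
  (forall i, Pf (t i) d (c i)) -> Pf (fun j => \sum_(i < n) t i j) d (\sum_(i < n) c i).
Proof.
elim: n t c => [|n IH] t c H.
  rewrite big_ord0; case: d H => [|d] H.
    by apply: (Pf_ext _ (Pf_const 0)) => j _; rewrite big_ord0.
  by apply: (Pf_ext _ (Pf_weak (Pf_const 0) (ltn0Sn d))) => j _; rewrite big_ord0.
rewrite big_ord_recr /=.
apply: (Pf_ext _ (Pf_add (IH (fun i => t (widen_ord (leqnSn n) i)) _ (fun i => H _)) (H ord_max))).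
by move=> j _; rewrite big_ord_recr.
Qed.

Definition sX n : {poly R} := ('X + 1) ^+ n - 'X ^+ n.

Lemma sX_prop n : (size (sX n.+1) <= n.+1)%N /\ (sX n.+1)`_n = n.+1%:R.
Proof.
elim: n => [|n [s e]].
  rewrite /sX !expr1 addrC addKr size_polyC coefC /=; split=> //.
  by rewrite oner_neq0.
have -> : sX n.+2 = ('X + 1) * sX n.+1 + 'X ^+ n.+1.
  rewrite /sX (exprS _ n.+1) (exprS ('X : {poly R}) n.+1); ring.
split.
  apply: (leq_trans (size_polyD _ _)); rewrite geq_max size_polyXn leqnn andbT.
  apply: (leq_trans (size_polyMleq _ _)).
  have : (size (('X + 1)%R : {poly R}) <= 2)%N.
    by apply: (leq_trans (size_polyD _ _)); rewrite size_polyX size_polyC; case: (_ != 0).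
  lia.
rewrite coefD mulrDl mul1r coefD coefXM /= e coefXn eqxx.
rewrite [X in _ + X + _](leq_sizeP _ _ s) // addr0.
by rewrite -natrD addn1.
Qed.

Lemma faul d : forall p : {poly R}, (size p <= d)%N ->
  exists q : {poly R}, [/\ (size q <= d.+1)%N, d%:R * q`_d = p`_d.-1 &
     forall x, q.[x + 1] - q.[x] = p.[x]].
Proof.
elim: d => [|d IH] p sp.
  move: sp; rewrite size_poly_leq0 => /eqP ->.
  exists 0; split; first by rewrite size_poly0.
    by rewrite !coef0 mul0r.
  by move=> x; rewrite !horner0 subrr.
set c := (((d.+1)%:R^-1 : rat) *: p`_d).
have [s e] := sX_prop d.
set r := p - c%:P * sX d.+1.
have sr : (size r <= d)%N.
  have sr1 : (size r <= d.+1)%N.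
    apply: (leq_trans (size_polyD _ _)); rewrite geq_max sp size_polyN.
    by rewrite mul_polyC (leq_trans (size_scale_leq _ _)).
  case: (leqP (size r) d) => // lt.
  have szr : size r = d.+1 by apply/eqP; rewrite eqn_leq sr1 lt.
  have : lead_coef r = 0.
    rewrite lead_coefE szr /= /r coefB coefCM e mulrC natinv subrr //.
  move/eqP; rewrite lead_coef_eq0 => /eqP r0.
  by move: szr; rewrite r0 size_poly0.
have [q1 [s1 e1 h1]] := IH r sr.
exists (c%:P * 'X ^+ d.+1 + q1); split.
- apply: (leq_trans (size_polyD _ _)); rewrite geq_max (leq_trans s1) //.
  by rewrite mul_polyC (leq_trans (size_scale_leq _ _)) // size_polyXn.
- rewrite coefD coefCM coefXn eqxx mulr1 [q1`__](leq_sizeP _ _ s1) // addr0.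
  by rewrite natinv.
- move=> x; have := h1 x; rewrite /r /sX !hornerE.
  move/eqP; rewrite subr_eq => /eqP ->.
  set A := (x + 1) ^+ d.+1; set B := x ^+ d.+1.
  ring.
Qed.

Lemma Pf_step f g d c : (forall j, (0 < j)%N -> f j.+1 = f j + g j) ->
  Pf g d (d.+1%:R * c) -> Pf f d.+1 c.
Proof.
move=> fg [p [s e h]].
have [q [sq eq hq]] := faul s.
have qc : q`_d.+1 = c.
  move: eq; rewrite e /= => /(congr1 (fun y => ((d.+1)%:R^-1 : rat) *: y)).
  by rewrite !natinv2.
set K := f 1%N - q.[1].
exists (q + K%:P); split.
- apply: (leq_trans (size_polyD _ _)); rewrite geq_max sq.
  by apply: (leq_trans (size_polyC_leq1 _)).
- by rewrite coefD coefC /= addr0.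
- elim=> [//|j IHj] _; rewrite hornerD hornerC.
  case: j IHj => [|j] IHj.
    by rewrite /K addrC subrK.
  rewrite fg // IHj // h // -(hq j.+1%:R) natr1.
  rewrite hornerD hornerC; ring.
Qed.

Lemma Pf_uniq f d c1 c2 : Pf f d c1 -> Pf f d c2 -> c1 = c2.
Proof.
move=> [p [s e h]] [q [s' e' h']].
have pq : p = q.
  apply/eqP; rewrite -subr_eq0; apply/negPn/negP => nz.
  suff : (size [seq (i.+1%:R : R) | i <- iota 0 (size (p - q)%R)] < size (p - q)%R)%N.
    by rewrite size_map size_iota ltnn.
  apply: (max_poly_roots nz).
    apply/allP => x /mapP [i _ ->]; rewrite rootE !hornerE -h // -h' // subrr //.
  rewrite map_inj_uniq ?iota_uniq // => a b /natR_inj; case.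
  done.
by rewrite -e -e' pq.
Qed.

Lemma Pf0_val f c : Pf f 0 c -> forall j, (0 < j)%N -> f j = c.
Proof. by move=> [p [s e h]] j j0; rewrite h // (size1_polyC s) hornerC e. Qed.

Lemma Pf_eq f d c c' : c = c' -> Pf f d c -> Pf f d c'.
Proof. by move->. Qed.

Lemma Pf_weak' f d c d' : Pf f d c -> (d < d')%N -> Pf f d' 0.
Proof. exact: Pf_weak. Qed.

End PF.

Definition cc (N : nat) : rat := (-1) ^+ N / (2 ^+ N * N`!%:R).
Definition ee (N : nat) : rat := if N is N''.+2 then cc N'' / 3 else 0.

Lemma cc0 : cc 0 = 1.
Proof. by rewrite /cc !expr0 fact0 !mul1r invr1. Qed.

Lemma cc_rec N : (N.*2.+2)%:R * cc N.+1 = - cc N.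
Proof.
rewrite /cc -doubleS -mul2n natrM factS natrM !exprS.
have h1 : (2 ^+ N : rat) != 0 by rewrite expf_neq0.
have h2 : (N`!%:R : rat) != 0 by rewrite pnatr_eq0 -lt0n fact_gt0.
have h3 : (N.+1%:R : rat) != 0 by rewrite pnatr_eq0.
by field; rewrite h1 h2 /= addrC natr1 h3.
Qed.

Lemma ee_rec N : (N.*2.+3)%:R * ee N.+2 = - ee N.+1 + cc N.
Proof.
case: N => [|M] /=.
  by rewrite oppr0 add0r !mulrS mulr0n; field.
have := cc_rec M => /(congr1 (fun x => - x)); rewrite opprK => <-.
rewrite doubleS.
by rewrite !mulrS -mul2n natrM; field.
Qed.


Section W.
Variable k : nat.
Local Notation R := {mpoly rat[k]}.

Lemma W0 (X Y : nat -> fps R) :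
  (forall j n, (0 < j)%N -> X j.+1 n = fps_mul (X j) (Y j) n) ->
  (forall j, (0 < j)%N -> Y j 0%N = 1) ->
  X 1%N 0%N = 1 ->
  (forall n, (0 < n)%N -> exists y, Pf (fun j => Y j n) n y) ->
  Pf (fun j => Y j 1%N) 1 (-1) ->
  forall N, Pf (fun j => X j N) N.*2 (cc N)%:MP.
Proof.
move=> hX hY0 hX0 hY hY1.
have X0 : forall j, (0 < j)%N -> X j 0%N = 1.
  elim=> // j IH _; case: j IH => [|j] IH; first done.
  by rewrite hX // /fps_mul big_ord1 subn0 hY0 // mulr1 IH.
suff H : forall N i, (i <= N)%N -> Pf (fun j => X j i) i.*2 (cc i)%:MP.
  by move=> N; apply: (H N).
elim=> [|N IH] i iN.
  move: iN; rewrite leqn0 => /eqP ->.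
  apply: (Pf_eq _ (Pf_ext _ (Pf_const 1))); first by rewrite cc0 mpolyC1.
  by move=> j j0; rewrite X0.
case: (ltnP i N.+1) => [lt|ge]; first by apply: IH.
have -> : i = N.+1 by apply/eqP; rewrite eqn_leq iN ge.
rewrite doubleS.
apply: (Pf_step (g := fun j => \sum_(l < N) X j l * Y j (N.+1 - l)%N + X j N * Y j 1%N)).
  move=> j j0; rewrite hX // /fps_mul big_ord_recr /= subnn hY0 // mulr1 addrC.
  by rewrite big_ord_recr /= subSnn.
apply: (Pf_eq _ (Pf_add (c1 := 0) _ _)); last first.
- have := Pf_mul (IH N (leqnn N)) hY1; rewrite addn1; exact.
- apply: (Pf_eq _ (Pf_sum (c := fun _ => 0) _)); first by rewrite big1.
  move=> l; have /hY [y Hy] : (0 < N.+1 - l)%N by rewrite subn_gt0 ltnS ltnW.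
  apply: (Pf_weak (Pf_mul (IH l _) Hy)); first by rewrite ltnW.
  have := ltn_ord l; lia.
- rewrite add0r mulrN1 -mpolyCN -cc_rec -mpolyC_nat -mpolyCM.
  done.
Qed.


Lemma Wm1 (G H F K : nat -> fps R) :
  (forall j n, (0 < j)%N -> G j.+1 n = fps_mul (G j) (F j) n) ->
  (forall j n, (0 < j)%N -> H j.+1 n = fps_mul (H j) (K j) n) ->
  (forall j, (0 < j)%N -> F j 0%N = 1) ->
  (forall j, (0 < j)%N -> K j 0%N = 1) ->
  (forall j, (0 < j)%N -> F j 1%N = K j 1%N) ->
  (forall j, (0 < j)%N -> G j 0%N = 1) ->
  (forall j, (0 < j)%N -> H j 0%N = 1) ->
  (forall n, (0 < n)%N -> Pf (fun j => F j n) n ((-1) ^+ n)) ->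
  (forall n, (1 < n)%N -> Pf (fun j => F j n - K j n) n ((-1) ^+ n)) ->
  (forall N, Pf (fun j => H j N) N.*2 (cc N)%:MP) ->
  forall N, Pf (fun j => G j N.+1 - H j N.+1) N.*2.+1 (ee N.+1)%:MP.
Proof.
move=> hG hH hF0 hK0 hFK1 hG0 hH0 hF hFK hHP.
pose D j n := G j n - H j n.
have D0 : forall j, (0 < j)%N -> D j 0%N = 0.
  by move=> j j0; rewrite /D hG0 // hH0 // subrr.
have rec : forall j n, (0 < j)%N -> D j.+1 n =
    \sum_(i < n.+1) (D j i * F j (n - i)%N) +
    \sum_(i < n.+1) (H j i * (F j (n - i)%N - K j (n - i)%N)).
  move=> j n j0; rewrite /D hG // hH // /fps_mul -big_split -sumrB.
  by apply: eq_bigr => i _ /=; ring.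
suff HH : forall N i, (i <= N)%N -> Pf (fun j => D j i.+1) i.*2.+1 (ee i.+1)%:MP.
  by move=> N; apply: (HH N).
elim=> [|N IH] i iN.
  move: iN; rewrite leqn0 => /eqP -> /=.
  apply: (Pf_step (g := fun _ => 0)).
    move=> j j0; rewrite rec // !big_ord_recr !big_ord0 /= !add0r subnn.
    rewrite D0 // mul0r add0r hF0 // mulr1 hH0 // hFK1 // hK0 // !subrr.
    by rewrite !mulr0 !addr0.
  by rewrite /ee mpolyC0 mulr0; apply: Pf_const.
case: (ltnP i N.+1) => [lt|ge]; first by apply: IH.
have -> : i = N.+1 by apply/eqP; rewrite eqn_leq iN ge.
apply: (Pf_step (g := fun j =>
   (\sum_(l < N) D j l.+1 * F j (N.+1 - l)%N + D j N.+1 * F j 1%N) +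
   (\sum_(l < N) H j l * (F j (N.+2 - l)%N - K j (N.+2 - l)%N)
     + H j N * (F j 2%N - K j 2%N)))).
  move=> j j0; rewrite rec //.
  have e1 : \sum_(i < N.+3) D j i * F j (N.+2 - i)%N =
      D j N.+2 + (\sum_(l < N) D j l.+1 * F j (N.+1 - l)%N + D j N.+1 * F j 1%N).
    rewrite big_ord_recr /= subnn hF0 // mulr1 addrC; congr (_ + _).
    rewrite big_ord_recl /= D0 // mul0r add0r big_ord_recr /=.
    rewrite /bump; congr (_ + _); last by rewrite leq0n add1n subSS subSnn.
  have e2 : \sum_(i < N.+3) H j i * (F j (N.+2 - i)%N - K j (N.+2 - i)%N) =
      \sum_(l < N) H j l * (F j (N.+2 - l)%N - K j (N.+2 - l)%N)
        + H j N * (F j 2%N - K j 2%N).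
    rewrite big_ord_recr /= subnn hF0 // hK0 // subrr mulr0 addr0.
    rewrite big_ord_recr /= subSnn hFK1 // subrr mulr0 addr0.
    rewrite big_ord_recr /= -addn2 addKn.
    done.
  by rewrite e1 e2 -addrA.
rewrite doubleS.
have A1 : Pf (fun j => \sum_(l < N) D j l.+1 * F j (N.+1 - l)%N) N.*2.+2 0.
  apply: (Pf_eq _ (Pf_sum (c := fun _ => 0) _)); first by rewrite big1.
  move=> l; have /hF Hy : (0 < N.+1 - l)%N by rewrite subn_gt0 ltnS ltnW.
  apply: (Pf_weak (Pf_mul (IH l _) Hy)); first by rewrite ltnW.
  have := ltn_ord l; lia.
have A2 : Pf (fun j => D j N.+1 * F j 1%N) N.*2.+2 ((ee N.+1)%:MP * (-1) ^+ 1).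
  by have := Pf_mul (IH N (leqnn N)) (hF 1%N isT); rewrite addn1.
have B1 : Pf (fun j => \sum_(l < N) H j l * (F j (N.+2 - l)%N - K j (N.+2 - l)%N))
    N.*2.+2 0.
  apply: (Pf_eq _ (Pf_sum (c := fun _ => 0) _)); first by rewrite big1.
  move=> l; have /hFK Hy : (1 < N.+2 - l)%N by have := ltn_ord l; lia.
  apply: (Pf_weak (Pf_mul (hHP l) Hy)).
  have := ltn_ord l; lia.
have B2 : Pf (fun j => H j N * (F j 2%N - K j 2%N)) N.*2.+2 ((cc N)%:MP * (-1) ^+ 2).
  by have := Pf_mul (hHP N) (hFK 2%N isT); rewrite addn2.
apply: (Pf_eq _ (Pf_add (Pf_add A1 A2) (Pf_add B1 B2))).
rewrite !add0r expr1 expr2 mulrNN mulr1 mulrN1 mulr1 -mpolyCN -mpolyCD -ee_rec mpolyCM mpolyC_nat.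
done.
Qed.

End W.

Section FPSalg.
Variable R : comNzRingType.
Implicit Types f g h : fps R.

Definition toP n f : {poly R} := \poly_(i < n.+1) f i.

Lemma mulE f g n i : (i <= n)%N -> fps_mul f g i = (toP n f * toP n g)`_i.
Proof.
move=> le; rewrite coefM; apply: eq_bigr => l _; rewrite !coef_poly.
have l1 : (l < n.+1)%N by have := ltn_ord l; lia.
have l2 : (i - l < n.+1)%N by lia.
by rewrite l1 l2.
Qed.

Lemma coefM_ext (P1 P2 Q : {poly R}) n :
  (forall j, (j <= n)%N -> P1`_j = P2`_j) -> (P1 * Q)`_n = (P2 * Q)`_n.
Proof.
move=> h; rewrite !coefM; apply: eq_bigr => l _; rewrite h //.
by have := ltn_ord l; lia.
Qed.

Lemma fps_mulC f g : fps_mul f g = fps_mul g f.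
Proof.
apply: functional_extensionality => n.
by rewrite (mulE _ _ (leqnn n)) (mulE g f (leqnn n)) mulrC.
Qed.

Lemma fps_mulA f g h : fps_mul (fps_mul f g) h = fps_mul f (fps_mul g h).
Proof.
apply: functional_extensionality => n.
rewrite (mulE _ _ (leqnn n)) (mulE f _ (leqnn n)).
rewrite (@coefM_ext (toP n (fps_mul f g)) (toP n f * toP n g)); last first.
  by move=> j jn; rewrite coef_poly ltnS jn (mulE _ _ jn).
rewrite [in RHS]mulrC (@coefM_ext (toP n (fps_mul g h)) (toP n g * toP n h)); last first.
  by move=> j jn; rewrite coef_poly ltnS jn (mulE _ _ jn).
by rewrite [in RHS]mulrC mulrA.
Qed.

Lemma fps_mul1l g : fps_mul (fps_one R) g = g.
Proof.
apply: functional_extensionality => n.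
rewrite /fps_mul big_ord_recl /= /fps_one /fps_const /= mul1r subn0.
by rewrite big1 ?addr0 // => i _; rewrite /bump /=; rewrite mul0r.
Qed.

Lemma fps_mul1r g : fps_mul g (fps_one R) = g.
Proof. by rewrite fps_mulC fps_mul1l. Qed.

Lemma fps_prod_rcons (I : Type) (r : seq I) x (F : I -> fps R) :
  fps_prod (rcons r x) F = fps_mul (fps_prod r F) (F x).
Proof.
elim: r => [|y r IH] /=; first by rewrite fps_mul1r fps_mul1l.
by rewrite IH fps_mulA.
Qed.

Lemma fps_mulDl f g h n : fps_mul (fps_add f g) h n = fps_mul f h n + fps_mul g h n.
Proof. by rewrite /fps_mul -big_split; apply: eq_bigr => i _; rewrite mulrDl. Qed.

Lemma fps_mul_const c f n : fps_mul (fps_const c) f n = c * f n.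
Proof.
rewrite /fps_mul big_ord_recl /= subn0 big1 ?addr0 // => i _.
by rewrite /fps_const /= mul0r.
Qed.

Lemma fps_mul_t t a g n : (forall l, t l = if l == 1%N then a else 0) ->
  fps_mul t g n = if n is n'.+1 then a * g n' else 0.
Proof.
move=> ht; rewrite /fps_mul; case: n => [|n].
  by rewrite big_ord_recl big_ord0 ht /= mul0r addr0.
rewrite big_ord_recl big_ord_recl /= !ht /= mul0r add0r subn1 /=.
rewrite big1 ?addr0 // => i _; rewrite ht /bump /=; by rewrite mul0r.
Qed.

Lemma fps_x_mul g n : fps_mul (fps_x R) g n = if n is n'.+1 then g n' else 0.
Proof.
by rewrite (@fps_mul_t _ 1) //; case: n => // n; rewrite mul1r.
Qed.

End FPSalg.

Section Spec.
Variable m : nat.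
Local Notation R := {mpoly rat[m.+1]}.

Lemma iota_rcons a n : iota a n.+1 = rcons (iota a n) (a + n).
Proof. by rewrite -addn1 iotaD cats1. Qed.

Definition Fj (j : nat) : fps R := fps_div (one_ax2 m) (one_ix m j%:Z).
Definition Kj (j : nat) : fps R := fps_div (one_ix m (- j%:Z)) (one_ax2 m).
Definition beta : fps R := fps_inv (one_ax2 m).

Lemma Gser_S j : Gser m j.+1 = fps_mul (Gser m j) (Fj j).
Proof.
rewrite /Gser.
rewrite iota_rcons.
by rewrite /Gser map_rcons fps_prod_rcons.
Qed.

Lemma Hser_S j : (0 < j)%N -> Hser m j.+1 = fps_mul (Hser m j) (Kj j).
Proof.
case: j => // j _; rewrite /Hser.
have -> : j.+2.-1 = j.+1 by [].
have -> : j.+1.-1 = j by [].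
rewrite iota_rcons.
by rewrite map_rcons fps_prod_rcons.
Qed.

Lemma pow_t (t : fps R) a k n : (forall l, t l = if l == 1%N then a else 0) ->
  fps_pow t k n = if n == k then a ^+ k else 0.
Proof.
move=> ht; elim: k n => [|k IH] n.
  by rewrite /fps_pow /= /fps_one /fps_const expr0.
rewrite /fps_pow iterS -/(fps_pow t k) (fps_mul_t _ _ ht).
case: n => [|n] //; rewrite IH eqSS; case: (n == k) => //.
  by rewrite exprS.
by rewrite mulr0.
Qed.

Lemma inv_t (f : fps R) a n : (forall l, fps_sub (fps_one R) f l = if l == 1%N then a else 0) ->
  fps_inv f n = a ^+ n.
Proof.
move=> ht; rewrite /fps_inv big_ord_recr /= (pow_t _ _ ht) eqxx.
rewrite big1 ?add0r // => i _; rewrite (pow_t _ _ ht).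
by rewrite eqn_leq leqNgt ltn_ord.
Qed.

Lemma cx_coef (c : R) l : fps_mul (fps_const c) (fps_x R) l = if l == 1%N then c else 0.
Proof.
by rewrite fps_mul_const /fps_x; case: (l == 1%N); rewrite ?mulr1 ?mulr0.
Qed.

Lemma inv_ix (i : int) n : fps_inv (one_ix m i) n = (- i%:~R) ^+ n.
Proof.
apply: inv_t => l; rewrite /fps_sub /one_ix /fps_add cx_coef.
by rewrite opprD addrA subrr add0r; case: (l == 1%N); rewrite ?oppr0.
Qed.

Lemma oa0 : one_ax2 m 0%N = 1.
Proof.
rewrite /one_ax2 /fps_add /fps_one /fps_const /=.
by rewrite /fps_mul big_ord1 /= big_ord1 /fps_x /= mulr0 mulr0 addr0.
Qed.

Lemma oa1 : one_ax2 m 1%N = 0.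
Proof.
rewrite /one_ax2 /fps_add /fps_one /fps_const /=.
rewrite /fps_mul !big_ord_recr !big_ord0 /= /fps_x /=.
by rewrite !(mulr0, mul0r, addr0, add0r).
Qed.

Lemma beta0 : beta 0%N = 1.
Proof. by rewrite /beta /fps_inv big_ord1 /=. Qed.

Lemma beta1 : beta 1%N = 0.
Proof.
rewrite /beta /fps_inv !big_ord_recr big_ord0 /= add0r.
rewrite /fps_one /fps_const /= add0r /fps_mul !big_ord_recr big_ord0 /=.
rewrite /fps_sub /fps_one /fps_const /= oa0 oa1 subrr.
by rewrite !mul0r !addr0 subr0 mulr1 add0r.
Qed.

Lemma F_coef j n : Fj j n = \sum_(l < n.+1) one_ax2 m l * (- j%:R) ^+ (n - l).
Proof.
by rewrite /Fj /fps_div /fps_mul; apply: eq_bigr => l _; rewrite inv_ix.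
Qed.

Lemma K_coef j n : Kj j n = beta n + (if n is n'.+1 then - j%:R * beta n' else 0).
Proof.
rewrite /Kj /fps_div /one_ix fps_mulDl fps_mul1l.
rewrite (@fps_mul_t _ _ (- j%:R)) //.
by move=> l; rewrite cx_coef mulrNz.
Qed.


Lemma Pf_mj : Pf (fun j => - (j%:R : R)) 1 (-1).
Proof. exact: Pf_opp (Pf_X _). Qed.

Lemma F_Pf n : Pf (fun j => Fj j n) n ((-1) ^+ n).
Proof.
have E j : Fj j n = (- j%:R) ^+ n + \sum_(i < n) one_ax2 m i.+1 * (- j%:R) ^+ (n - i.+1).
  by rewrite F_coef big_ord_recl oa0 mul1r subn0.
apply: (Pf_ext (fun j _ => esym (E j))).
have h1 := Pf_exp n Pf_mj; rewrite mul1n in h1.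
have h2 : Pf (fun j => \sum_(i < n) one_ax2 m i.+1 * (- (j%:R : R)) ^+ (n - i.+1)) n 0.
  apply: (Pf_eq _ (Pf_sum (c := fun _ => 0) _)); first by rewrite big1.
  move=> i; apply: (Pf_weak (Pf_mul (Pf_const (one_ax2 m i.+1)) (Pf_exp (n - i.+1) Pf_mj))).
  have := ltn_ord i; lia.
exact: (Pf_eq (addr0 _) (Pf_add h1 h2)).
Qed.

Lemma F0 j : Fj j 0%N = 1.
Proof. by rewrite F_coef big_ord1 oa0 mul1r expr0. Qed.

Lemma K0 j : Kj j 0%N = 1.
Proof. by rewrite K_coef beta0 addr0. Qed.

Lemma FK1 j : Fj j 1%N = Kj j 1%N.
Proof.
rewrite F_coef K_coef big_ord_recr big_ord1 /= oa0 oa1 beta0 beta1.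
by rewrite mul1r mul0r addr0 add0r mulr1 subn0 expr1.
Qed.

Lemma K_Pf1 : Pf (fun j => Kj j 1%N) 1 (-1).
Proof.
apply: (Pf_ext (fun j _ => esym (K_coef j 1))).
have h := Pf_mul Pf_mj (Pf_const (beta 0%N)); rewrite beta0 mulr1 addn0 in h.
apply: (Pf_eq (add0r _) (Pf_add (Pf_weak (Pf_const (beta 1%N)) (ltn0Sn 0)) _)).
by apply: (Pf_ext _ h) => j _; rewrite beta0.
Qed.

Lemma K_Pf n : (0 < n)%N -> Pf (fun j => Kj j n) n 0 \/ n = 1%N.
Proof.
case: n => // [[|n]] _; [by right | left].
apply: (Pf_ext (fun j _ => esym (K_coef j n.+2))).
have h := Pf_mul Pf_mj (Pf_const (beta n.+1)); rewrite addn0 in h.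
apply: (Pf_eq (add0r _) (Pf_add (Pf_weak (Pf_const (beta n.+2)) (ltn0Sn _)) _)).
by apply: (Pf_weak h).
Qed.

Lemma FK_Pf n : (1 < n)%N -> Pf (fun j => Fj j n - Kj j n) n ((-1) ^+ n).
Proof.
move=> n1; have [h|e] := K_Pf (ltnW n1); last by rewrite e in n1.
apply: (Pf_eq _ (Pf_add (F_Pf n) (Pf_opp h))).
by rewrite oppr0 addr0.
Qed.

End Spec.

Unset Implicit Arguments.

Theorem proposition4p1 (m : nat) (S : nat -> {mpoly rat[m]}) :
  (forall j : nat, (0 < j)%N ->
     GHser m j m =
       ((2 * j - 1)%N)%:R *
         ('X_(@ord_max m)
          + \sum_(k < m.+2) mwiden (S k) * ((j * (j - 1))%N)%:R ^+ k)) ->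
  S m.+1 = ((-1) ^+ m / (3 * 2 ^+ m.+1 * (m`!)%:R) : rat)%:MP.
Proof.
move=> hyp.
have hG : forall j n, (0 < j)%N -> Gser m j.+1 n = fps_mul (Gser m j) (Fj m j) n.
  by move=> j n _; rewrite Gser_S.
have hH : forall j n, (0 < j)%N -> Hser m j.+1 n = fps_mul (Hser m j) (Kj m j) n.
  by move=> j n j0; rewrite Hser_S.
have G10 : Gser m 1 0%N = 1.
  by rewrite Gser_S; have -> : Gser m 0 = fps_one _ by []; rewrite fps_mul1l F0.
have H10 : Hser m 1 0%N = 1 by [].
have hFex : forall n, (0 < n)%N -> exists y, Pf (fun j => Fj m j n) n y.
  by move=> n _; eexists; exact: F_Pf.
have hKex : forall n, (0 < n)%N -> exists y, Pf (fun j => Kj m j n) n y.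
  move=> n n0; have [h|->] := K_Pf m n0; first by exists 0.
  by exists (-1); exact: K_Pf1.
have F1 : Pf (fun j => Fj m j 1%N) 1 (-1) by rewrite -[-1]expr1; exact: F_Pf.
have PG := W0 hG (fun j _ => F0 m j) G10 hFex F1.
have PH := W0 hH (fun j _ => K0 m j) H10 hKex (K_Pf1 m).
have G0 : forall j, (0 < j)%N -> Gser m j 0%N = 1.
  by move=> j j0; rewrite (Pf0_val (PG 0%N)) // cc0 mpolyC1.
have H0 : forall j, (0 < j)%N -> Hser m j 0%N = 1.
  by move=> j j0; rewrite (Pf0_val (PH 0%N)) // cc0 mpolyC1.
have PD := Wm1 hG hH (fun j _ => F0 m j) (fun j _ => K0 m j) (fun j _ => FK1 m j)
  G0 H0 (fun n _ => F_Pf m n) (@FK_Pf m) PH.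
have PGH : Pf (fun j => GHser m j m) m.*2.+3 (ee m.+2)%:MP.
  have E j : GHser m j m = \sum_(i < m) (Gser m j i.+2 - Hser m j i.+2) * one_ax2 m (m - i)%N
      + (Gser m j m.+2 - Hser m j m.+2).
    by rewrite /GHser /fps_mul big_ord_recr /= subnn oa0 mulr1.
  apply: (Pf_ext (fun j _ => esym (E j))).
  apply: (Pf_eq (add0r _) (Pf_add _ _)).
    apply: (Pf_eq _ (Pf_sum (c := fun _ => 0) _)); first by rewrite big1.
    move=> i; apply: (Pf_weak (Pf_mul (PD i.+1) (Pf_const (one_ax2 m (m - i)%N)))).
    have := ltn_ord i; rewrite -!mul2n; lia.
  by have := PD m.+1; rewrite doubleS.
have Pu : Pf (fun j => ((2 * j - 1)%N)%:R : {mpoly rat[m.+1]}) 1 2%:R.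
  apply: (@Pf_ext _ (fun j => 2%:R * j%:R - 1)).
    by move=> j j0; rewrite natrB ?natrM //; lia.
  apply: (Pf_eq _ (Pf_add (Pf_mul (Pf_const 2%:R) (Pf_X _)) (Pf_opp (Pf_weak (Pf_const 1) (ltn0Sn 0))))).
  by rewrite mulr1 oppr0 addr0.
have Pv : Pf (fun j => ((j * (j - 1))%N)%:R : {mpoly rat[m.+1]}) 2 1.
  apply: (@Pf_ext _ (fun j => j%:R * (j%:R - 1))).
    by move=> j j0; rewrite natrM natrB.
  apply: (Pf_eq _ (Pf_mul (Pf_X _) (Pf_add (Pf_X _) (Pf_opp (Pf_weak (Pf_const 1) (ltn0Sn 0)))))).
  by rewrite oppr0 addr0 mulr1.
have Psum : Pf (fun j => 'X_(@ord_max m) + \sum_(k < m.+2) mwiden (S k) * ((j * (j - 1))%N)%:R ^+ k)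
    m.*2.+2 (mwiden (S m.+1)).
  apply: (Pf_eq (add0r _) (Pf_add (Pf_weak (Pf_const 'X_(@ord_max m)) (ltn0Sn _)) _)).
  have E j : \sum_(k < m.+2) mwiden (S k) * ((j * (j - 1))%N)%:R ^+ k =
    \sum_(k < m.+1) mwiden (S k) * ((j * (j - 1))%N)%:R ^+ k
    + mwiden (S m.+1) * ((j * (j - 1))%N)%:R ^+ m.+1.
    by rewrite big_ord_recr.
  apply: (Pf_ext (fun j _ => esym (E j))).
  apply: (Pf_eq (add0r _) (Pf_add _ _)).
    apply: (Pf_eq _ (Pf_sum (c := fun _ => 0) _)); first by rewrite big1.
    move=> i; apply: (Pf_weak (Pf_mul (Pf_const (mwiden (S i))) (Pf_exp i Pv))).
    have := ltn_ord i; rewrite -!mul2n; lia.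
  have := Pf_mul (Pf_const (mwiden (S m.+1))) (Pf_exp m.+1 Pv).
  by rewrite expr1n mulr1 add0n mul2n doubleS.
have PR := Pf_mul Pu Psum.
have U := Pf_uniq PGH (Pf_ext (fun j j0 => esym (hyp j j0)) PR).
apply: inj_mwiden; rewrite mwidenC.
have -> : mwiden (S m.+1) = ((2%:R)^-1 * ee m.+2)%:MP.
  rewrite mpolyCM U mulrA -mpolyC_nat -mpolyCM mulVf ?mpolyC1 ?mul1r //.
congr mpolyC; rewrite /ee /cc exprS.
have h1 : (2 ^+ m : rat) != 0 by rewrite expf_neq0.
have h2 : (m`!%:R : rat) != 0 by rewrite pnatr_eq0 -lt0n fact_gt0.
by field; rewrite h1 h2.
Qed.
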